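(* Let $X=\sum_{n=0}^\infty a_nZ_n\binom{\cdot}{n}$ be a random Mahler series. Then $X$ is stationary (i.e. for every $s\in\mathbb{Z}_p$ the random function $X(\cdot+s)$ has the same law as $X$) if and only if $|a_n|\ge|a_{n+1}|$ for all $n\ge0$.
   Context: $\mathbb{Q}_p$ is the field of $p$-adic numbers with $p$-adic absolute value $|\cdot|$, and $\mathbb{Z}_p=\{x:|x|\le1\}$. $C(\mathbb{Z}_p,\mathbb{Q}_p)$ is the Banach space of continuous functions $\mathbb{Z}_p\to\mathbb{Q}_p$ with sup norm. For $x\in\mathbb{Z}_p$, $\binom{x}{0}=1$ and $\binom{x}{n}=x(x-1)\cdots(x-n+1)/n!$. A random Mahler series is the random function $X(t)=\sum_{n=0}^\infty a_nZ_n\binom{t}{n}$, $t\in\mathbb{Z}_p$, where $(Z_n)_{n\ge0}$ are independent random variables each uniformly distributed (normalised Haar measure) on $\mathbb{Z}_p$ — equivalently, independent $\mathbb{Q}_p$-valued $\mathbb{Q}_p$-Gaussian variables with essential supremum of $|Z_n|$ equal to $1$ — and $(a_n)\subset\mathbb{Q}_p$ satisfies $|a_n|\to0$; the series converges almost surely in $C(\mathbb{Z}_p,\mathbb{Q}_p)$. *)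

(* Defs.v *)
From HB Require Import structures.
From mathcomp Require Import all_boot all_order all_algebra.
From mathcomp Require Import all_classical all_reals all_analysis.
Set Implicit Arguments. Unset Strict Implicit. Unset Printing Implicit Defensive.
Import Order.TTheory GRing.Theory Num.Theory.
Local Open Scope classical_set_scope.
Local Open Scope ring_scope.

(* The field Q_p.  We describe (K, abs) as "the" field of p-adic       *)
(* numbers: a field with an absolute value which is multiplicative,    *)
(* ultrametric, restricts to the p-adic absolute value on Q, in which *)
(* Q is dense and which is complete.  These properties characterise   *)
(* (Q_p, |.|_p) up to unique isometric isomorphism (completion of Q). *)

Definition padic_abs_rat (R : realType) (p : nat) (q : rat) : R :=
  if q == 0 then 0
  else (p ^ logn p `|denq q|%N)%:R / (p ^ logn p `|numq q|%N)%:R.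

Definition is_Qp (R : realType) (p : nat) (K : fieldType) (abs : K -> R) : Prop :=
  (forall x, 0 <= abs x /\ (abs x = 0 <-> x = 0)) /\
  (forall x y, abs (x * y) = abs x * abs y) /\
  (forall x y, abs (x + y) <= Num.max (abs x) (abs y)) /\
  (forall q : rat, abs (ratr q) = padic_abs_rat R p q) /\
  (forall x (e : R), 0 < e -> exists q : rat, abs (x - ratr q) < e) /\
      (forall u : nat -> K,
          (forall e : R, 0 < e -> exists N, forall m n, (N <= m)%N -> (N <= n)%N ->
               abs (u m - u n) < e) ->
          exists l, forall e : R, 0 < e -> exists N, forall n, (N <= n)%N ->
               abs (u n - l) < e).

Definition Zp (R : realType) (K : fieldType) (abs : K -> R) : set K :=
  [set x | abs x <= 1].

Definition binom (K : fieldType) (x : K) (n : nat) : K :=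
  (\prod_(i < n) (x - i%:R)) / (n`!)%:R.

(* sum of a convergent series in (K, abs); 0 if it does not converge *)
Definition series_converges_to (R : realType) (K : fieldType) (abs : K -> R)
    (u : nat -> K) (l : K) : Prop :=
  forall e : R, 0 < e -> exists N, forall m, (N <= m)%N ->
     abs (\sum_(n < m) u n - l) < e.

Definition series_sum (R : realType) (K : fieldType) (abs : K -> R)
    (u : nat -> K) : K :=
  xget 0 [set l | series_converges_to abs u l].

Definition borelK (R : realType) (K : fieldType) (abs : K -> R) : set (set K) :=
  <<s [set B | exists (c : K) (r : R), B = [set y | abs (y - c) < r]] >>.

Definition continuous_on_Zp (R : realType) (K : fieldType) (abs : K -> R)
    (g : K -> K) : Prop :=
  forall t, Zp abs t -> forall e : R, 0 < e -> exists2 dl : R, 0 < dl &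
    forall u, Zp abs u -> abs (u - t) < dl -> abs (g u - g t) < e.

(* Borel sigma-algebra of C(Z_p, Q_p) with the sup norm (functions being
   considered only through their restriction to Z_p): generated by the
   open sup-norm balls  { f | sup_{t in Z_p} |f t - g t| < r }, g continuous.
   (For continuous f, the sup over the compact Z_p is attained, so
   "sup < r" is "forall t, |f t - g t| < r".) *)
Definition borelC (R : realType) (K : fieldType) (abs : K -> R) : set (set (K -> K)) :=
  <<s [set B | exists (g : K -> K) (r : R), continuous_on_Zp abs g /\ 0 < r /\
        B = [set f | forall t, Zp abs t -> abs (f t - g t) < r]] >>.

Section Prob.
Context (R : realType) (K : fieldType) (abs : K -> R)
        (d : measure_display) (T : measurableType d) (P : probability T R).

Definition measurable_K (Y : T -> K) : Prop :=
  forall B, borelK abs B -> measurable (Y @^-1` B).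

(* law of Y is the normalised Haar measure of Z_p: Y takes values in Z_p
   and its law is a translation-invariant (Borel probability) measure on Z_p *)
Definition haar_uniform (Y : T -> K) : Prop :=
  (forall w, Zp abs (Y w)) /\
  forall a, Zp abs a -> forall B, borelK abs B ->
    P (Y @^-1` [set a + y | y in B]) = P (Y @^-1` B).

Definition independent_family (Z : nat -> T -> K) : Prop :=
  forall (s : seq nat) (B : nat -> set K), uniq s -> (forall i, borelK abs (B i)) ->
    P (\bigcap_(i in [set j | j \in s]) (Z i @^-1` B i)) =
    (\prod_(i <- s) P (Z i @^-1` B i))%E.

Definition mahler_series (a : nat -> K) (Z : nat -> T -> K) : T -> K -> K :=
  fun w t => series_sum abs (fun n => a n * Z n w * binom t n).

Definition stationary (X : T -> K -> K) : Prop :=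
  forall s, Zp abs s -> forall B, borelC abs B ->
    P (X @^-1` B) = P ((fun w t => X w (t + s)) @^-1` B).

End Prob.

(* Main.v *)
Require Import Defs.
From HB Require Import structures.
From mathcomp Require Import all_boot all_order all_algebra.
From mathcomp Require Import all_classical all_reals all_analysis.
From mathcomp Require Import ring zify.
Import Order.TTheory GRing.Theory Num.Theory.
Local Open Scope classical_set_scope.
Local Open Scope ring_scope.
Set Implicit Arguments. Unset Strict Implicit.
Section Basic.
Variables (R : realType) (K : fieldType) (abs : K -> R) (p : nat).
Hypothesis hp : prime p.
Hypothesis hQ : is_Qp p abs.

Lemma abs_ge0 x : 0 <= abs x.
Proof. by case: hQ => h _; case: (h x). Qed.

Lemma abs_eq0 x : abs x = 0 <-> x = 0.
Proof. by case: hQ => h _; case: (h x). Qed.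

Lemma abs0 : abs 0 = 0.
Proof. exact/abs_eq0. Qed.

Lemma absM x y : abs (x * y) = abs x * abs y.
Proof. by case: hQ => _ [h _]. Qed.

Lemma absD x y : abs (x + y) <= Num.max (abs x) (abs y).
Proof. by case: hQ => _ [_ [h _]]. Qed.

Lemma abs_ratr q : abs (ratr q) = padic_abs_rat R p q.
Proof. by case: hQ => _ [_ [_ [h _]]]. Qed.

Lemma abs_gt0 x : x != 0 -> 0 < abs x.
Proof.
move=> x0; rewrite lt_def abs_ge0 andbT; apply/eqP => /abs_eq0 h.
by rewrite h eqxx in x0.
Qed.

Lemma abs_int (z : int) : z != 0 ->
  abs (z%:~R) = ((p ^ logn p `|z|%N)%:R)^-1.
Proof.
move=> z0; rewrite -[z%:~R](ratr_int K) abs_ratr /padic_abs_rat.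
rewrite intr_eq0 (negbTE z0) numq_int denq_int /= logn1 expn0 div1r.
by [].
Qed.

Lemma p_gt1 : (1 < p)%N.
Proof. exact: prime_gt1. Qed.

Lemma pexp_gt0 m : (0 : R) < (p ^ m)%:R.
Proof. by rewrite ltr0n expn_gt0 prime_gt0. Qed.

Lemma abs_int_le1 (z : int) : abs (z%:~R) <= 1.
Proof.
have [->|z0] := eqVneq z 0; first by rewrite mulr0z abs0 ler01.
rewrite abs_int // invr_le1 ?pexp_gt0 ?unitfE ?gt_eqF ?pexp_gt0 //.
by rewrite ler1n expn_gt0 prime_gt0.
Qed.

Lemma abs_nat_le1 n : abs (n%:R) <= 1.
Proof. by have := abs_int_le1 n; rewrite pmulrn. Qed.

Lemma natr_neq0 n : (0 < n)%N -> (n%:R : K) != 0.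
Proof.
move=> n0; apply/eqP => h.
have nz : (n%:Z != 0) by rewrite eqz_nat -lt0n.
have := @abs_int _ nz; rewrite -pmulrn h abs0 => /esym/eqP.
by rewrite invr_eq0 pnatr_eq0 expn_eq0 -leqn0 leqNgt (prime_gt0 hp).
Qed.

Lemma abs1 : abs 1 = 1.
Proof. by have := @abs_int 1 isT; rewrite logn1 expn0 invr1. Qed.

Lemma absN1 : abs (-1) = 1.
Proof. by have := @abs_int (-1) isT; rewrite logn1 expn0 invr1. Qed.

Lemma absN x : abs (- x) = abs x.
Proof. by rewrite -mulN1r absM absN1 mul1r. Qed.

Lemma absB x y : abs (x - y) = abs (y - x).
Proof. by rewrite -absN opprB. Qed.

Lemma absD_lt x y e : abs x < e -> abs y < e -> abs (x + y) < e.
Proof. by move=> hx hy; apply: le_lt_trans (absD x y) _; rewrite gt_max hx hy. Qed.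

Lemma absD_le x y e : abs x <= e -> abs y <= e -> abs (x + y) <= e.
Proof. by move=> hx hy; apply: le_trans (absD x y) _; rewrite ge_max hx hy. Qed.

Lemma absB_lt x y e : abs x < e -> abs y < e -> abs (x - y) < e.
Proof. by move=> hx hy; apply: absD_lt => //; rewrite absN. Qed.

Lemma abs_sum_lt (I : Type) (s : seq I) (P : pred I) (F : I -> K) e : 0 < e ->
  (forall i, P i -> abs (F i) < e) -> abs (\sum_(i <- s | P i) F i) < e.
Proof.
move=> e0 h; apply: (big_ind (fun x => abs x < e)).
- by rewrite abs0.
- by move=> x y; apply: absD_lt.
- exact: h.
Qed.

Lemma abs_sum_le (I : Type) (s : seq I) (P : pred I) (F : I -> K) e : 0 <= e ->
  (forall i, P i -> abs (F i) <= e) -> abs (\sum_(i <- s | P i) F i) <= e.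
Proof.
move=> e0 h; apply: (big_ind (fun x => abs x <= e)).
- by rewrite abs0.
- by move=> x y; apply: absD_le.
- exact: h.
Qed.

Lemma abs_dom x y : abs y < abs x -> abs (x + y) = abs x.
Proof.
move=> hyx; apply/eqP; rewrite eq_le; apply/andP; split.
  by apply: le_trans (absD x y) _; rewrite ge_max lexx ltW.
have : abs x <= Num.max (abs (x + y)) (abs y).
  by have := absD (x + y) (- y); rewrite addrK absN.
rewrite le_max => /orP[//|h]; by rewrite leNgt hyx in h.
Qed.

Lemma absM_le1 x y : abs x <= 1 -> abs y <= 1 -> abs (x * y) <= 1.
Proof. by move=> hx hy; rewrite absM; apply: mulr_ile1 => //; exact: abs_ge0. Qed.


Lemma binom0 (x : K) : binom x 0 = 1.
Proof. by rewrite /binom big_ord0 fact0 divr1. Qed.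

Lemma binom0S k : binom (0 : K) k.+1 = 0.
Proof. by rewrite /binom big_ord_recl /= subr0 mul0r mul0r. Qed.

Lemma fact_neq0 k : (k`!%:R : K) != 0.
Proof. exact: (natr_neq0 (fact_gt0 k)). Qed.

Lemma binomS (x : K) k : binom (x + 1) k.+1 = binom x k.+1 + binom x k.
Proof.
rewrite /binom big_ord_recl big_ord_recr /=.
rewrite (eq_bigr (fun i : 'I_k => x - i%:R)); last first.
  by move=> i _; rewrite /bump /= add1n -natr1; ring.
set A := \prod_(i < k) _.
have h1 := fact_neq0 k.
have h2 : (k.+1%:R : K) != 0 by exact: (natr_neq0 (ltn0Sn k)).
rewrite factS natrM subr0.
field.
by rewrite h1 addrC natr1 h2.
Qed.

Lemma binom_nat j k : binom (j%:R : K) k = ('C(j, k))%:R.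
Proof.
elim: j k => [|j IH] k; case: k => [|k].
- by rewrite binom0.
- by rewrite binom0S bin0n.
- by rewrite binom0 bin0.
- by rewrite -natr1 binomS !IH binS natrD.
Qed.

Lemma abs_binom_nat j k : abs (binom (j%:R : K) k) <= 1.
Proof. by rewrite binom_nat; exact: abs_nat_le1. Qed.

Lemma abs_prod_diff k (x y : K) : abs x <= 1 -> abs y <= 1 ->
  abs (\prod_(i < k) (x - i%:R) - \prod_(i < k) (y - i%:R)) <= abs (x - y).
Proof.
move=> hx hy.
have hb z i : abs z <= 1 -> abs (z - i%:R) <= 1.
  by move=> hz; apply: absD_le => //; rewrite absN abs_nat_le1.
have hpr z : abs z <= 1 -> abs (\prod_(i < k) (z - i%:R)) <= 1.
  move=> hz; apply: (big_ind (fun u => abs u <= 1)).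
  - by rewrite abs1.
  - by move=> u v; apply: absM_le1.
  - by move=> i _; apply: hb.
elim: k hpr => [|k IH] hpr.
  by rewrite !big_ord0 subrr abs0 abs_ge0.
rewrite !big_ord_recr /=.
set A := \prod_(i < k) _; set B := \prod_(i < k) (y - _).
have -> : A * (x - k%:R) - B * (y - k%:R) = A * (x - y) + (A - B) * (y - k%:R).
  by rewrite /A /B; ring.
apply: absD_le.
  rewrite absM; apply: ler_piMl; [exact: abs_ge0|].
  apply: (big_ind (fun u => abs u <= 1)).
  - by rewrite abs1.
  - by move=> u v; apply: absM_le1.
  - by move=> i _; apply: hb.
rewrite absM; apply: le_trans (ler_piMr _ (hb _ _ hy)) _; first exact: abs_ge0.
apply: IH => z hz; apply: (big_ind (fun u => abs u <= 1)).
  - by rewrite abs1.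
  - by move=> u v; apply: absM_le1.
  - by move=> i _; apply: hb.
Qed.

Lemma abs_binom_diff k (x y : K) : abs x <= 1 -> abs y <= 1 ->
  abs (binom x k - binom y k) <= abs (x - y) / abs (k`!%:R).
Proof.
move=> hx hy; rewrite /binom -mulrBl absM.
have hf : 0 < abs (k`!%:R : K) by apply: abs_gt0; exact: fact_neq0.
rewrite ler_pdivlMr // -mulrA.
have -> : abs ((k`!%:R : K)^-1) * abs (k`!%:R) = 1.
  by rewrite -absM mulVf ?fact_neq0 // abs1.
by rewrite mulr1; apply: abs_prod_diff.
Qed.


Definition rho m : R := ((p ^ m)%:R)^-1.

Lemma rho_gt0 m : 0 < rho m.
Proof. by rewrite invr_gt0 pexp_gt0. Qed.

Lemma rho_le1 m : rho m <= 1.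
Proof.
by rewrite invr_le1 ?unitfE ?gt_eqF ?pexp_gt0 // ler1n expn_gt0 prime_gt0.
Qed.

Lemma den_not_dvd q : abs (ratr q) <= 1 -> ~~ (p %| `|denq q|)%N.
Proof.
move=> hq; apply/negP => pd.
have pn : ~~ (p %| `|numq q|)%N.
  apply/negP => pn; have := coprime_num_den q; rewrite /coprime => /eqP g.
  have : (p %| gcdn `|numq q| `|denq q|)%N by rewrite dvdn_gcd pn pd.
  by rewrite g dvdn1 => /eqP p1; move: (prime_gt1 hp); rewrite p1.
have q0 : q != 0.
  apply/negP => q0; move: pn; rewrite -numq_eq0 in q0.
  by rewrite (eqP q0) dvdn0.
move: hq; rewrite abs_ratr /padic_abs_rat (negbTE q0).
rewrite (logn_coprime (p:=p) (m:=`|numq q|)); last by rewrite prime_coprime.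
rewrite expn0 divr1 (_ : (1 : R) = 1%:R) // ler_nat leqNgt => /negP; apply.
have : (0 < logn p `|denq q|)%N.
  by rewrite logn_gt0 mem_primes hp absz_gt0 denq_neq0 pd.
case: (logn p _) => // l _.
by rewrite expnS; apply: leq_trans (prime_gt1 hp) _; rewrite leq_pmulr // expn_gt0 prime_gt0.
Qed.

Lemma abs_den q : abs (ratr q) <= 1 -> abs ((denq q)%:~R) = 1.
Proof.
move=> hq; rewrite abs_int ?denq_neq0 //.
by rewrite logn_coprime ?prime_coprime ?den_not_dvd // expn0 invr1.
Qed.

Lemma abs_int_dvd (z : int) (k : nat) : (p ^ k %| `|z|)%N -> abs (z%:~R) <= rho k.
Proof.
have [->|z0] := eqVneq z 0; first by rewrite mulr0z abs0 ltW ?rho_gt0.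
move=> hd; rewrite abs_int // /rho lef_pV2 ?posrE ?pexp_gt0 // ler_nat.
rewrite leq_pexp2l ?prime_gt1 //.
  by rewrite prime_gt0.
by rewrite -pfactor_dvdn // absz_gt0.
Qed.

Lemma intr_neq0 (z : int) : z != 0 -> (z%:~R : K) != 0.
Proof.
move=> z0; apply/eqP => h; have := abs_int z0; rewrite h abs0 => /esym/eqP.
by rewrite invr_eq0 pnatr_eq0 expn_eq0 -leqn0 leqNgt prime_gt0.
Qed.

Lemma approx_nat (x : K) m : abs x <= 1 ->
  exists2 j : nat, (j < p ^ m.+1)%N & abs (x - j%:R) < rho m.
Proof.
move=> hx.
have [q hq] : exists q : rat, abs (x - ratr q) < rho m.
  by case: hQ => _ [_ [_ [_ [h _]]]]; apply: h; exact: rho_gt0.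
have hq1 : abs (ratr q) <= 1.
  have -> : ratr q = x - (x - ratr q) :> K by rewrite opprB addrC subrK.
  apply: absD_le => //; rewrite absN; apply: ltW; apply: lt_le_trans hq _.
  exact: rho_le1.
set M := (p ^ m.+1)%N.
have M0 : (0 < M)%N by rewrite expn_gt0 prime_gt0.
set n := numq q; set d := denq q.
have cd : coprime `|d| M.
  by rewrite coprime_sym coprimeXl // prime_coprime // den_not_dvd.
have d0 : (0 < `|d|)%N by rewrite absz_gt0 denq_neq0.
case: (egcdnP M d0) => km kn hk _.
rewrite (eqP cd) in hk.
set jz := ((n * km%:Z) %% M%:Z)%Z.
have jz0 : 0 <= jz by apply: modz_ge0; rewrite eqz_nat -lt0n.
have jzM : jz < M%:Z.
  by have := @ltz_mod (n * km%:Z) M%:Z; rewrite eqz_nat -lt0n M0 => /(_ isT).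
exists `|jz|%N.
  by rewrite -ltz_nat gez0_abs.
have hqj : abs (ratr q - (`|jz|%N)%:R) < rho m.
  have dpos : 0 < d by exact: denq_gt0.
  have eqd : `|d|%N%:Z = d by rewrite gez0_abs // ltW.
  have hdiv : (M%:Z %| n - jz * d)%Z.
    have E := divz_eq (n * km%:Z) M%:Z.
    have hk' : (km%:Z * d = kn%:Z * M%:Z + 1)%R.
      by rewrite -eqd -!PoszM hk PoszD.
    apply/dvdzP; exists (- n * kn%:Z + (n * km%:Z %/ M%:Z)%Z * d).
    rewrite /jz (_ : ((n * km%:Z) %% M%:Z)%Z = n * km%:Z - (n * km%:Z %/ M%:Z)%Z * M%:Z); last first.
      by rewrite {2}E addrAC subrr add0r.
    have -> : n - (n * km%:Z - (n * km%:Z %/ M%:Z)%Z * M%:Z) * d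
             = n * (1 - km%:Z * d) + (n * km%:Z %/ M%:Z)%Z * M%:Z * d by ring.
    by rewrite hk'; ring.
  have Eq : ratr q - (`|jz|%N)%:R = (n - jz * d)%:~R / d%:~R :> K.
    rewrite /ratr -/n -/d intrD intrN intrM pmulrn gez0_abs //.
    have dn : (d%:~R : K) != 0 by rewrite intr_neq0 // denq_neq0.
    by field.
  rewrite Eq absM.
  have -> : abs ((d%:~R : K)^-1) = 1.
    have h1 := abs_den hq1.
    have : abs ((d%:~R : K)^-1) * abs (d%:~R) = 1.
      by rewrite -absM mulVf ?abs1 // intr_neq0 // denq_neq0.
    by rewrite h1 mulr1.
  rewrite mulr1; apply: le_lt_trans (abs_int_dvd (k := m.+1) _) _.
    by move: hdiv => /dvdzP [c ->]; rewrite abszM absz_nat dvdn_mull.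
  rewrite /rho ltf_pV2 ?posrE ?pexp_gt0 // ltr_nat ltn_exp2l ?prime_gt1 //.
rewrite -[x](subrK (ratr q)) -addrA; apply: absD_lt => //.
Qed.

Lemma approx_uniq (x : K) m (i j : nat) : abs (x - i%:R) < rho m ->
  abs (x - j%:R) < rho m -> (i < p ^ m.+1)%N -> (j < p ^ m.+1)%N -> i = j.
Proof.
move=> hi hj iM jM; apply/eqP; apply/negPn/negP => ij.
have h : abs ((i%:Z - j%:Z)%:~R : K) < rho m.
  rewrite intrD intrN -!pmulrn.
  have -> : (i%:R - j%:R : K) = (x - j%:R) - (x - i%:R) by ring.
  exact: absB_lt.
have z0 : (i%:Z - j%:Z) != 0 by rewrite subr_eq0 eqz_nat.
move: h; rewrite abs_int // /rho ltf_pV2 ?posrE ?pexp_gt0 // ltr_nat.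
rewrite ltn_exp2l ?prime_gt1 // => h.
have hd : (p ^ m.+1 %| `|i%:Z - j%:Z|)%N by rewrite pfactor_dvdn // absz_gt0.
have := dvdn_leq _ hd; rewrite absz_gt0 z0 => /(_ isT).
move: iM jM; set M := (p ^ m.+1)%N => iM jM.
lia.
Qed.

Lemma rho_small (e : R) : 0 < e -> exists m, rho m < e.
Proof.
move=> e0.
have b0 : 0 <= e^-1 by rewrite invr_ge0 ltW.
have := archi_boundP b0; set n := Num.bound _ => hn.
exists n; rewrite /rho -[e]invrK ltf_pV2 ?posrE ?invr_gt0 ?pexp_gt0 //.
apply: lt_le_trans hn _; rewrite ler_nat.
by apply: ltnW; apply: ltn_expl; exact: prime_gt1.
Qed.

Lemma rho_mono m n : (m <= n)%N -> rho n <= rho m.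
Proof.
move=> mn; rewrite /rho lef_pV2 ?posrE ?pexp_gt0 // ler_nat.
by rewrite leq_pexp2l // prime_gt0.
Qed.

Lemma abs_binom_le1 (t : K) k : abs t <= 1 -> abs (binom t k) <= 1.
Proof.
move=> ht.
have hf : 0 < abs (k`!%:R : K) by apply: abs_gt0; exact: fact_neq0.
have [m hm] := rho_small hf.
have [j _ hj] := approx_nat m ht.
rewrite -[binom t k](subrK (binom j%:R k)); apply: absD_le; last first.
  exact: abs_binom_nat.
apply: le_trans (abs_binom_diff _ ht (abs_nat_le1 _)) _.
rewrite ler_pdivrMr // mul1r; apply: ltW; exact: lt_trans hj hm.
Qed.

Lemma Zp_add (x y : K) : abs x <= 1 -> abs y <= 1 -> abs (x + y) <= 1.
Proof. exact: absD_le. Qed.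

Lemma Zp_sub (x y : K) : abs x <= 1 -> abs y <= 1 -> abs (x - y) <= 1.
Proof. by move=> hx hy; apply: absD_le; rewrite ?absN. Qed.

Lemma binom_cont (t u : K) k e : abs t <= 1 -> abs u <= 1 -> 0 < e ->
  abs (u - t) < e * abs (k`!%:R : K) -> abs (binom u k - binom t k) < e.
Proof.
move=> ht hu e0 h.
have hf : 0 < abs (k`!%:R : K) by apply: abs_gt0; exact: fact_neq0.
apply: le_lt_trans (abs_binom_diff _ hu ht) _.
by rewrite ltr_pdivrMr.
Qed.

Variables (d : measure_display) (T : measurableType d) (P : probability T R)
  (Z : nat -> T -> K).
Hypothesis hZm : forall n, measurable_K abs (Z n).
Hypothesis hZu : forall n, haar_uniform abs P (Z n).
Hypothesis hind : independent_family abs P Z.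

Definition ball (c : K) (r : R) : set K := [set y | abs (y - c) < r].

Lemma ball_borel c r : borelK abs (ball c r).
Proof. by apply: sub_sigma_algebra; exists c, r. Qed.

Lemma Zball_meas n c r : measurable (Z n @^-1` ball c r).
Proof. exact: (hZm n (ball_borel c r)). Qed.

Lemma hZ1 n w : abs (Z n w) <= 1.
Proof. by case: (hZu n) => h _; exact: h. Qed.

Lemma prob_ball n c m : abs c <= 1 ->
  P (Z n @^-1` ball c (rho m)) = (((p ^ m.+1)%:R)^-1 : R)%:E.
Proof.
move=> hc.
have trans a : abs a <= 1 ->
    P (Z n @^-1` ball a (rho m)) = P (Z n @^-1` ball 0 (rho m)).
  move=> ha; have := (hZu n).2 a ha (ball 0 (rho m)) (ball_borel 0 (rho m)).
  rewrite (_ : [set a + y | y in ball 0 (rho m)] = ball a (rho m)) //.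
  apply/seteqP; split => y /=.
    by move=> [y' hy' <-]; rewrite /ball /= (addrC a) addrK; move: hy'; rewrite /ball /= subr0.
  move=> hy; exists (y - a); first by rewrite /ball /= subr0.
  by rewrite addrC subrK.
rewrite trans //.
set M := (p ^ m.+1)%N.
have M0 : (0 < M)%N by rewrite expn_gt0 prime_gt0.
pose F := fun i : 'I_M => Z n @^-1` ball (i%:R) (rho m).
have cover : [set: T] = \big[setU/set0]_(i < M) F i.
  apply/seteqP; split => w // _.
  have [j jM hj] := approx_nat m (hZ1 n w).
  by rewrite (bigD1 (Ordinal jM)) //=; left.
have triv : trivIset [set: 'I_M] F.
  move=> i j _ _ [w [hi hj]]; apply: val_inj => /=.
  exact: (approx_uniq hi hj).
have Fm i : measurable (F i) by exact: Zball_meas.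
have := probability_setT P; rewrite cover measure_bigsetU_ord //.
rewrite (eq_bigr (fun=> P (Z n @^-1` ball 0 (rho m)))); last first.
  by move=> i _; apply: trans; exact: abs_nat_le1.
set v := P _.
have v0 : (0 <= v)%E by exact: measure_ge0.
have v1 : (v <= 1)%E by exact: probability_le1 (Zball_meas _ _ _).
have vf : v \is a fin_num by rewrite ge0_fin_numE // (le_lt_trans v1) // ltey.
rewrite -(fineK vf) sumr_const card_ord => hv0.
have [hv] : (fine v *+ M)%:E = 1%E by rewrite EFin_natmul.
congr (_%:E); apply: (mulIf (x := M%:R)); first by rewrite pnatr_eq0 -lt0n.
by rewrite mulVf ?pnatr_eq0 -?lt0n // mulr_natr.
Qed.

Definition box m L (c : nat -> K) : set T :=
  \bigcap_(k in [set k | (k < L.+1)%N]) (Z k @^-1` ball (c k) (rho m)).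

Lemma box_meas m L c : measurable (box m L c).
Proof.
by apply: bigcap_measurableType => k _; exact: Zball_meas.
Qed.

Lemma box_prob m L c : (forall k, abs (c k) <= 1) ->
  P (box m L c) = ((((p ^ m.+1)%:R)^-1 : R) ^+ L.+1)%:E.
Proof.
move=> hc.
have := hind (B := fun i => ball (c i) (rho m)) (iota_uniq 0 L.+1)
  (fun i => ball_borel (c i) (rho m)).
rewrite (_ : [set j | j \in iota 0 L.+1] = [set k | (k < L.+1)%N]); last first.
  by apply/seteqP; split => k /=; rewrite -/(iota 0 L.+1) mem_iota.
move=> ->.
rewrite (eq_bigr (fun=> (((p ^ m.+1)%:R)^-1 : R)%:E)); last first.
  by move=> i _; exact: prob_ball.
rewrite prodEFin; congr (_%:E).
by rewrite -[iota 0 L.+1]/(index_iota 0 L.+1) prodr_const_nat subn0.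
Qed.

Definition res m (x : K) : nat :=
  xget 0%N [set j : nat | (j < p ^ m.+1)%N /\ abs (x - j%:R) < rho m].

Lemma res_spec m x : abs x <= 1 ->
  (res m x < p ^ m.+1)%N /\ abs (x - (res m x)%:R) < rho m.
Proof.
move=> hx; rewrite /res.
apply: (xgetPex 0%N (P := [set j : nat | (j < p ^ m.+1)%N /\ abs (x - j%:R) < rho m])).
by have [j ? ?] := approx_nat m hx; exists j.
Qed.

Definition Mp m := (p ^ m.+1).-1.

Lemma MpE m : (Mp m).+1 = (p ^ m.+1)%N.
Proof. by rewrite /Mp prednK // expn_gt0 prime_gt0. Qed.

Definition Vt m L := {ffun 'I_L.+1 -> 'I_(Mp m).+1}.

Definition cast m L (v : Vt m L) : nat -> K := fun k => ((v (inord k)) : nat)%:R.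

Definition Vw m L w : Vt m L := [ffun i : 'I_L.+1 => inord (res m (Z i w))].

Lemma cast_le1 m L (v : Vt m L) k : abs (cast v k) <= 1.
Proof. exact: abs_nat_le1. Qed.

Lemma Vw_close m L w k : (k <= L)%N -> abs (Z k w - cast (Vw m L w) k) < rho m.
Proof.
move=> kL; rewrite /cast ffunE /= (@inordK L k) //.
have [h1 h2] := res_spec m (hZ1 k w).
by rewrite inordK ?MpE.
Qed.

Lemma box_Vw m L w (v : Vt m L) : box m L (cast v) w <-> Vw m L w = v.
Proof.
split; last first.
  by move=> <- k /= kL; rewrite /ball /=; apply: Vw_close.
move=> hb; apply/ffunP => i; rewrite ffunE; apply: val_inj => /=.
have [h1 h2] := res_spec m (hZ1 i w).
rewrite inordK ?MpE //.
have := hb i (ltn_ord i); rewrite /ball /= /cast inord_val => h3.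
apply: (approx_uniq h2 h3) => //.
by rewrite -MpE.
Qed.

Lemma box_disj m L (v1 v2 : Vt m L) w :
  box m L (cast v1) w -> box m L (cast v2) w -> v1 = v2.
Proof. by move=> /box_Vw <- /box_Vw. Qed.

Lemma partition_P m L (A : set T) :
  (forall v : Vt m L, measurable (box m L (cast v) `&` A)) ->
  P A = \sum_(i < #|{: Vt m L}|) P (box m L (cast (enum_val i)) `&` A).
Proof.
move=> hm.
rewrite -measure_bigsetU_ord //; last first.
  move=> i j _ _ [w [[h1 _] [h2 _]]].
  by apply: enum_val_inj; exact: (box_disj h1 h2).
congr (P _); apply/seteqP; split => w.
  move=> hA; rewrite (bigD1 (enum_rank (Vw m L w))) //=; left; split => //.
  by rewrite enum_rankK; apply/box_Vw.
elim/big_rec: _ => // i U _ hU [[_ ?]|] //; exact: hU.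
Qed.

Definition invariant m L (Q : (nat -> K) -> Prop) :=
  forall z z', (forall k, (k <= L)%N -> abs (z k - z' k) < rho m) -> Q z -> Q z'.

Lemma inv_sym m L (z z' : nat -> K) :
  (forall k, (k <= L)%N -> abs (z k - z' k) < rho m) ->
  (forall k, (k <= L)%N -> abs (z' k - z k) < rho m).
Proof. by move=> h k kL; rewrite absB; apply: h. Qed.

Lemma box_Q m L Q (v : Vt m L) : invariant m L Q ->
  box m L (cast v) `&` [set w | Q (fun k => Z k w)] =
  if `[< Q (cast v) >] then box m L (cast v) else set0.
Proof.
move=> hQ'; case: asboolP => hq; apply/seteqP; split => w //.
- by case.
- move=> hb; split => //; apply: hQ' hq => k kL; rewrite absB; exact: hb.
- move=> [hb hw]; apply: hq; apply: hQ' hw => k kL; exact: hb.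
Qed.

Lemma Q_meas m L Q : invariant m L Q -> measurable [set w | Q (fun k => Z k w)].
Proof.
move=> hQ'.
have -> : [set w | Q (fun k => Z k w)] =
    \big[setU/set0]_(v : Vt m L | `[< Q (cast v) >]) box m L (cast v).
  apply/seteqP; split => w.
    move=> hw; rewrite (bigD1 (Vw m L w)) /=; first by left; apply/box_Vw.
    apply/asboolP; apply: hQ' hw => k kL; exact: Vw_close.
  elim/big_rec: _ => // v U /asboolP hv hU [hb|hu]; last exact: hU.
  by apply: hQ' hv => k kL; rewrite absB; exact: hb.
by apply: bigsetU_measurable => v _; exact: box_meas.
Qed.

Lemma Q_prob m L Q : invariant m L Q ->
  P [set w | Q (fun k => Z k w)] =
  \sum_(i < #|{: Vt m L}|)
     (if `[< Q (cast (enum_val i)) >]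
      then ((((p ^ m.+1)%:R)^-1 : R) ^+ L.+1)%:E else 0%E).
Proof.
move=> hQ'; rewrite (partition_P (m := m) (L := L)).
  apply: eq_bigr => i _; rewrite box_Q //.
  by case: ifP => _; rewrite ?measure0 // box_prob // => k; exact: cast_le1.
by move=> v; rewrite box_Q //; case: ifP => _; [exact: box_meas|exact: measurable0].
Qed.

Lemma Phi_prob m L Q (Phi : (nat -> K) -> (nat -> K)) :
  invariant m L Q ->
  (forall z, (forall k, (k <= L)%N -> abs (z k) <= 1) ->
     forall k, (k <= L)%N -> abs (Phi z k) <= 1) ->
  (forall z z', (forall k, (k <= L)%N -> abs (z k - z' k) < rho m) ->
     forall k, (k <= L)%N -> abs (Phi z k - Phi z' k) < rho m) ->
  (forall z z', (forall k, (k <= L)%N -> abs (Phi z k - Phi z' k) < rho m) ->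
     forall k, (k <= L)%N -> abs (z k - z' k) < rho m) ->
  P [set w | Q (Phi (fun k => Z k w))] = P [set w | Q (fun k => Z k w)].
Proof.
move=> hQ' h1 h2 h3.
have hQP : invariant m L (fun z => Q (Phi z)).
  by move=> z z' hz; apply: hQ'; apply: h2.
rewrite (Q_prob hQP) (Q_prob hQ').
pose sig (v : Vt m L) : Vt m L := [ffun i : 'I_L.+1 => inord (res m (Phi (cast v) i))].
have hc (v : Vt m L) : forall k, (k <= L)%N -> abs (cast v k) <= 1.
  by move=> k _; exact: cast_le1.
have hA v k : (k <= L)%N -> abs (Phi (cast v) k - cast (sig v) k) < rho m.
  move=> kL; rewrite /cast ffunE (@inordK L k) //.
  have [r1 r2] := res_spec m (h1 _ (hc v) k kL).
  by rewrite inordK ?MpE.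
have hB v : `[< Q (Phi (cast v)) >] = `[< Q (cast (sig v)) >].
  apply/asboolP/asboolP => hq.
    by apply: hQ' hq => k kL; apply: hA.
  by apply: hQ' hq => k kL; rewrite absB; apply: hA.
have sig_inj : injective sig.
  move=> v1 v2 e.
  have hP k : (k <= L)%N -> abs (Phi (cast v1) k - Phi (cast v2) k) < rho m.
    move=> kL; have := absB_lt (hA v1 k kL) (hA v2 k kL).
    rewrite e; congr (abs _ < _); ring.
  have := h3 _ _ hP => hv.
  apply/ffunP => i; apply: val_inj.
  have := hv i (ltn_ord i); rewrite /cast inord_val => hi.
  apply: (approx_uniq (x := (v1 i)%:R) (m := m)); first by rewrite subrr abs0 rho_gt0.
  - exact: hi.
  - by rewrite -MpE ltn_ord.
  - by rewrite -MpE ltn_ord.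
pose sig' (i : 'I_#|{: Vt m L}|) := enum_rank (sig (enum_val i)).
have sig'_inj : injective sig'.
  by move=> i j /enum_rank_inj /sig_inj /enum_val_inj.
rewrite [RHS](reindex_inj sig'_inj).
by apply: eq_bigr => i _; rewrite /sig' enum_rankK hB.
Qed.

Variable a : nat -> K.
Hypothesis ha0 : forall e : R, 0 < e -> exists N, forall n, (N <= n)%N -> abs (a n) < e.

Definition X := mahler_series abs a Z.

Definition S N w (t : K) := \sum_(n < N) a n * Z n w * binom t n.

Lemma term_le n w (t : K) : abs t <= 1 -> abs (a n * Z n w * binom t n) <= abs (a n).
Proof.
move=> ht; rewrite absM absM -mulrA; apply: ler_piMr; first exact: abs_ge0.
apply: mulr_ile1; [exact: abs_ge0|exact: abs_ge0|exact: hZ1|exact: abs_binom_le1].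
Qed.

Lemma S_diff N m w t e : abs t <= 1 -> 0 < e -> (N <= m)%N ->
  (forall n, (N <= n)%N -> abs (a n) < e) -> abs (S m w t - S N w t) < e.
Proof.
move=> ht e0 Nm he; rewrite /S -!(big_mkord xpredT (fun n => a n * Z n w * binom t n)).
rewrite (big_cat_nat (leq0n N) Nm) /= addrAC subrr add0r.
rewrite big_seq; apply: abs_sum_lt => // n; rewrite mem_index_iota => /andP[hn _].
by apply: le_lt_trans (term_le _ _ ht) (he _ hn).
Qed.

Lemma X_conv w t : abs t <= 1 ->
  series_converges_to abs (fun n => a n * Z n w * binom t n) (X w t).
Proof.
move=> ht; rewrite /X /mahler_series /series_sum.
apply: (xgetPex 0 (P := [set l | series_converges_to abs (fun n => a n * Z n w * binom t n) l])).
case: hQ => _ [_ [_ [_ [_ hc]]]].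
apply: (hc (fun m => S m w t)) => e e0.
have [N hN] := ha0 e0; exists N => m n hm hn.
have -> : S m w t - S n w t = (S m w t - S N w t) - (S n w t - S N w t) by ring.
by apply: absB_lt; apply: S_diff.
Qed.

Lemma trunc N w t e : abs t <= 1 -> 0 < e ->
  (forall n, (N <= n)%N -> abs (a n) < e) -> abs (X w t - S N w t) < e.
Proof.
move=> ht e0 he.
have [N1 hN1] := X_conv w ht e0.
have h1 := hN1 (maxn N N1) (leq_maxr _ _).
have h2 := S_diff w ht e0 (leq_maxl N N1) he.
have -> : X w t - S N w t = (S (maxn N N1) w t - S N w t) - (S (maxn N N1) w t - X w t) by ring.
exact: absB_lt.
Qed.

Definition ev (F : T -> K -> K) (g : K -> K) (r : R) : set T :=
  [set w | forall t, abs t <= 1 -> abs (F w t - g t) < r].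

Definition Qg N (g : K -> K) r : (nat -> K) -> Prop := fun z =>
  forall t, abs t <= 1 -> abs (\sum_(k < N) a k * z k * binom t k - g t) < r.

Lemma close_iff (x y c : K) r : abs (x - y) < r ->
  (abs (x - c) < r <-> abs (y - c) < r).
Proof.
move=> hxy; split => h.
  have -> : y - c = (x - c) - (x - y) by ring.
  exact: absB_lt.
have -> : x - c = (y - c) + (x - y) by ring.
exact: absD_lt.
Qed.

Lemma ev_X N g r : 0 < r -> (forall n, (N <= n)%N -> abs (a n) < r) ->
  ev X g r = [set w | Qg N g r (fun k => Z k w)].
Proof.
move=> r0 hN; apply/seteqP; split => w /= h t ht.
  by apply/(close_iff _ (trunc w ht r0 hN)); exact: h.
by apply/(close_iff _ (trunc w ht r0 hN)); exact: h.
Qed.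

Lemma Qg_inv N g r m L : (N <= L.+1)%N -> 0 < r ->
  (forall k, (k < N)%N -> abs (a k) * rho m <= r) -> invariant m L (Qg N g r).
Proof.
move=> NL r0 har z z' hz hq t ht.
have hd : abs (\sum_(k < N) a k * z k * binom t k - \sum_(k < N) a k * z' k * binom t k) < r.
  rewrite -sumrB; apply: abs_sum_lt => // k _.
  have kL : (k <= L)%N by rewrite -ltnS; apply: leq_trans NL.
  rewrite (_ : a k * z k * binom t k - a k * z' k * binom t k = a k * (z k - z' k) * binom t k); last by ring.
  rewrite absM; apply: le_lt_trans (ler_piMr _ (abs_binom_le1 _ ht)) _.
    by rewrite absM mulr_ge0 ?abs_ge0.
  rewrite absM; have [a0|a0] := eqVneq (abs (a k)) 0; first by rewrite a0 mul0r.
  apply: lt_le_trans (har k (ltn_ord k)).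
  rewrite ltr_pM2l ?hz //; rewrite lt_def a0 abs_ge0 //.
by apply/(close_iff _ hd); exact: hq.
Qed.

Definition Phi N (z : nat -> K) (k : nat) : K :=
  if (k < N)%N then z k + a k.+1 / a k * z k.+1 else z k.

Lemma pascal_sum N (c : nat -> K) (t : K) :
  \sum_(k < N.+1) c k * binom (t + 1) k =
  \sum_(k < N) (c k + c k.+1) * binom t k + c N * binom t N.
Proof.
elim: N => [|N IH].
  by rewrite big_ord1 big_ord0 add0r !binom0.
rewrite big_ord_recr /= IH binomS [in RHS]big_ord_recr /=; ring.
Qed.

Lemma amono (hmono : forall n, abs (a n.+1) <= abs (a n)) k : abs (a k) <= abs (a 0).
Proof. by elim: k => // k IH; apply: le_trans (hmono k) IH. Qed.

Lemma au (hmono : forall n, abs (a n.+1) <= abs (a n)) k : a k * (a k.+1 / a k) = a k.+1.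
Proof.
have [a0|a0] := eqVneq (a k) 0.
  have : abs (a k.+1) <= 0 by rewrite -abs0 -a0; exact: hmono.
  move=> h; have : abs (a k.+1) = 0 by apply/eqP; rewrite eq_le h abs_ge0.
  by move/abs_eq0 => ->; rewrite a0 mul0r.
by rewrite mulrCA mulfV // mulr1.
Qed.

Lemma u_le1 (hmono : forall n, abs (a n.+1) <= abs (a n)) k : abs (a k.+1 / a k) <= 1.
Proof.
have [a0|a0] := eqVneq (a k) 0; first by rewrite a0 invr0 mulr0 abs0 ler01.
have h0 : 0 < abs (a k) by exact: abs_gt0.
have e : abs (a k.+1 / a k) * abs (a k) = abs (a k.+1) by rewrite -absM mulfVK.
by rewrite -(ler_pM2r h0) mul1r e.
Qed.

Lemma ev_shift1 (hmono : forall n, abs (a n.+1) <= abs (a n)) N g r :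
  0 < r -> (forall n, (N <= n)%N -> abs (a n) < r) ->
  ev (fun w t => X w (t + 1)) g r = [set w | Qg N g r (Phi N (fun k => Z k w))].
Proof.
move=> r0 hN.
have hN1 : forall n, (N.+1 <= n)%N -> abs (a n) < r by move=> n hn; apply: hN; exact: ltnW.
have key w t : abs t <= 1 -> abs (X w (t + 1) - \sum_(k < N) a k * Phi N (fun k => Z k w) k * binom t k) < r.
  move=> ht; have ht1 : abs (t + 1) <= 1 by apply: absD_le; rewrite ?abs1.
  have E : S N.+1 w (t + 1) = \sum_(k < N) a k * Phi N (fun k => Z k w) k * binom t k
                              + a N * Z N w * binom t N.
    rewrite /S (eq_bigr (fun k : 'I_N.+1 => (a k * Z k w) * binom (t + 1) k)) //.
    rewrite (pascal_sum N (fun k => a k * Z k w)); congr (_ + _).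
    apply: eq_bigr => k _; rewrite /Phi ltn_ord.
    have := au hmono k => e.
    by rewrite mulrDr (mulrA (a k) (a k.+1 / a k)) e.
  have -> : X w (t + 1) - \sum_(k < N) a k * Phi N (fun k => Z k w) k * binom t k
     = (X w (t + 1) - S N.+1 w (t + 1)) + a N * Z N w * binom t N by rewrite E; ring.
  apply: absD_lt; first exact: trunc.
  by apply: le_lt_trans (term_le _ _ ht) (hN _ (leqnn N)).
apply/seteqP; split => w /= h t ht.
  by apply/(close_iff _ (key w t ht)); exact: h.
by apply/(close_iff _ (key w t ht)); exact: h.
Qed.

Lemma choose_m (f : nat -> R) N r : 0 < r -> (forall k, 0 <= f k) ->
  exists m, forall k, (k < N)%N -> f k * rho m <= r.
Proof.
move=> r0 f0; elim: N => [|N [m1 h1]]; first by exists 0%N.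
have hr : 0 < r / (f N + 1) by rewrite divr_gt0 // ltr_wpDl.
have [m2 h2] := rho_small hr.
exists (maxn m1 m2) => k; rewrite ltnS leq_eqVlt => /orP[/eqP ->|kN].
  apply: le_trans (ler_wpM2l (f0 N) (rho_mono (leq_maxr m1 m2))) _.
  have hle : f N <= f N + 1 by rewrite lerDl ler01.
  apply: ltW; apply: le_lt_trans (ler_wpM2r (ltW (rho_gt0 m2)) hle) _.
  by move: h2; rewrite ltr_pdivlMr ?ltr_wpDl // mulrC.
apply: le_trans (ler_wpM2l (f0 k) (rho_mono (leq_maxl m1 m2))) _.
exact: h1.
Qed.

Section Mono.
Hypothesis hmono : forall n, abs (a n.+1) <= abs (a n).

Lemma Phi_h1 N z : (forall k, (k <= N)%N -> abs (z k) <= 1) ->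
  forall k, (k <= N)%N -> abs (Phi N z k) <= 1.
Proof.
move=> hz k kN; rewrite /Phi; case: ifP => kN'; last exact: hz.
apply: absD_le; first exact: hz.
by apply: absM_le1; [exact: u_le1|exact: hz].
Qed.

Lemma Phi_h2 m N z z' : (forall k, (k <= N)%N -> abs (z k - z' k) < rho m) ->
  forall k, (k <= N)%N -> abs (Phi N z k - Phi N z' k) < rho m.
Proof.
move=> hz k kN; rewrite /Phi; case: ifP => kN'; last exact: hz.
have -> : z k + a k.+1 / a k * z k.+1 - (z' k + a k.+1 / a k * z' k.+1)
   = (z k - z' k) + a k.+1 / a k * (z k.+1 - z' k.+1) by ring.
apply: absD_lt; first exact: hz.
rewrite absM; apply: le_lt_trans (ler_piMl (abs_ge0 _) (u_le1 hmono k)) _.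
exact: hz.
Qed.

Lemma Phi_h3 m N z z' : (forall k, (k <= N)%N -> abs (Phi N z k - Phi N z' k) < rho m) ->
  forall k, (k <= N)%N -> abs (z k - z' k) < rho m.
Proof.
move=> hz.
suff H : forall j, (j <= N)%N -> abs (z (N - j)%N - z' (N - j)%N) < rho m.
  by move=> k kN; have := H (N - k)%N (leq_subr _ _); rewrite subKn.
elim=> [|j IH] jN.
  by have := hz N (leqnn N); rewrite /Phi ltnn subn0 => h.
have kN : (N - j.+1 < N)%N by lia.
have := hz (N - j.+1)%N (ltnW kN); rewrite /Phi kN.
have e : (N - j.+1).+1 = (N - j)%N by lia.
rewrite e => h.
have -> : z (N - j.+1)%N - z' (N - j.+1)%N =
   (z (N - j.+1)%N + a (N - j)%N / a (N - j.+1)%N * z (N - j)%N -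
     (z' (N - j.+1)%N + a (N - j)%N / a (N - j.+1)%N * z' (N - j)%N))
   - a (N - j)%N / a (N - j.+1)%N * (z (N - j)%N - z' (N - j)%N) by ring.
apply: absB_lt => //.
rewrite absM; apply: le_lt_trans (ler_piMl (abs_ge0 _) _) _.
  by have := u_le1 hmono (N - j.+1)%N; rewrite e.
by apply: IH; apply: ltnW.
Qed.

Lemma shift1_prob g r : 0 < r ->
  P (ev (fun w t => X w (t + 1)) g r) = P (ev X g r).
Proof.
move=> r0; have [N hN] := ha0 r0.
have [m hm] := choose_m N r0 (fun k => abs_ge0 (a k)).
rewrite (ev_shift1 hmono g r0 hN) (ev_X g r0 hN).
have hinv : invariant m N (Qg N g r) by apply: Qg_inv => // k kN; exact: hm.
apply: (Phi_prob hinv).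
- exact: Phi_h1.
- exact: Phi_h2.
- exact: Phi_h3.
Qed.

End Mono.

Lemma ev_meas g r : 0 < r -> measurable (ev X g r).
Proof.
move=> r0; have [N hN] := ha0 r0.
have [m hm] := choose_m N r0 (fun k => abs_ge0 (a k)).
rewrite (ev_X g r0 hN); apply: (Q_meas (m := m) (L := N)).
by apply: Qg_inv => // k kN; exact: hm.
Qed.

Lemma ev_subst (c : K) (F : T -> K -> K) g r : abs c <= 1 ->
  ev (fun w t => F w (t + c)) g r = ev F (fun u => g (u - c)) r.
Proof.
move=> hc; apply/seteqP; split => w /= h t ht.
  by have := h (t - c) (Zp_sub ht hc); rewrite subrK.
by have := h (t + c) (Zp_add ht hc); rewrite addrK.
Qed.

Lemma shiftn_prob (hmono : forall n, abs (a n.+1) <= abs (a n)) j : forall g r, 0 < r ->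
  P (ev (fun w t => X w (t + j%:R)) g r) = P (ev X g r).
Proof.
elim: j => [|j IH] g r r0.
  by congr (P _); apply/seteqP; split => w /= h t ht; have := h t ht; rewrite addr0.
have -> : (fun w t => X w (t + j.+1%:R)) = (fun w t => (fun w u => X w (u + 1)) w (t + j%:R)).
  by apply: funext => w; apply: funext => t; rewrite -natr1 addrA.
rewrite (@ev_subst j%:R (fun w u => X w (u + 1)) g r (abs_nat_le1 _)) shift1_prob //.
by rewrite -(@ev_subst j%:R X g r (abs_nat_le1 _)) IH.
Qed.

Lemma shift_approx s r : abs s <= 1 -> 0 < r -> exists j : nat, forall g,
  ev (fun w t => X w (t + s)) g r = ev (fun w t => X w (t + j%:R)) g r.
Proof.
move=> hs r0; have [N hN] := ha0 r0.
pose f k := abs (a k) / abs (k`!%:R : K).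
have hf0 k : 0 <= f k by rewrite /f divr_ge0 ?abs_ge0.
have [m hm] := choose_m N r0 hf0.
have [j _ hj] := approx_nat m hs.
exists j => g.
have key w t : abs t <= 1 -> abs (X w (t + s) - X w (t + j%:R)) < r.
  move=> ht; have hts : abs (t + s) <= 1 by exact: Zp_add.
  have htj : abs (t + j%:R) <= 1 by apply: Zp_add => //; exact: abs_nat_le1.
  have -> : X w (t + s) - X w (t + j%:R) =
     ((X w (t + s) - S N w (t + s)) - (X w (t + j%:R) - S N w (t + j%:R)))
     + (S N w (t + s) - S N w (t + j%:R)) by ring.
  apply: absD_lt; first by apply: absB_lt; apply: trunc.
  rewrite /S -sumrB; apply: abs_sum_lt => // k _.
  rewrite -mulrBr absM.
  have hk := hm k (ltn_ord k).
  apply: le_lt_trans (ler_wpM2l (abs_ge0 _) (abs_binom_diff k hts htj)) _.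
  have -> : t + s - (t + j%:R) = s - j%:R by ring.
  have hZ : abs (a k * Z k w) <= abs (a k).
    by rewrite absM; apply: ler_piMr; [exact: abs_ge0|exact: hZ1].
  have hfk : 0 < abs (k`!%:R : K) by apply: abs_gt0; exact: fact_neq0.
  apply: le_lt_trans (ler_wpM2r _ hZ) _.
    by rewrite divr_ge0 ?abs_ge0.
  rewrite mulrA -/(f k) /f.
  have [z0|z0] := eqVneq (abs (a k)) 0; first by rewrite z0 mul0r mul0r.
  apply: lt_le_trans hk.
  rewrite mulrAC ltr_pM2l // divr_gt0 //.
  by rewrite lt_def z0 abs_ge0.
apply/seteqP; split => w /= h t ht.
  by apply/(close_iff _ (key w t ht)); exact: h.
by apply/(close_iff _ (key w t ht)); exact: h.
Qed.

Definition cball (g : K -> K) (r : R) : set (K -> K) :=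
  [set f | forall t, abs t <= 1 -> abs (f t - g t) < r].

Definition Gb : set (set (K -> K)) :=
  [set B | B = set0 \/ exists g r, 0 < r /\ B = cball g r].

Lemma Gb_setI : setI_closed Gb.
Proof.
move=> A B [->|[g1 [r1 [r1p ->]]]]; first by left; rewrite set0I.
move=> [->|[g2 [r2 [r2p ->]]]]; first by left; rewrite setI0.
have [->|/set0P [f0 [h1 h2]]] := eqVneq (cball g1 r1 `&` cball g2 r2) set0; first by left.
right.
have sub (ga gb : K -> K) ra rb : ra <= rb -> cball ga ra f0 -> cball gb rb f0 ->
    cball ga ra `<=` cball gb rb.
  move=> hr ha hb f hf t ht.
  have -> : f t - gb t = (f t - ga t) + ((ga t - f0 t) + (f0 t - gb t)) by ring.
  apply: absD_lt; first exact: lt_le_trans (hf t ht) hr.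
  apply: absD_lt; last exact: hb.
  by rewrite absB; exact: lt_le_trans (ha t ht) hr.
case: (leP r1 r2) => hr.
  by exists g1, r1; split => //; rewrite setIidl //; apply: sub.
exists g2, r2; split => //; rewrite setIidr //; apply: sub => //; exact: ltW.
Qed.

Section IfDir.
Hypothesis hmono : forall n, abs (a n.+1) <= abs (a n).

Lemma stat_ball s g r : abs s <= 1 -> 0 < r ->
  [/\ measurable (ev X g r), measurable (ev (fun w t => X w (t + s)) g r) &
      P (ev X g r) = P (ev (fun w t => X w (t + s)) g r)].
Proof.
move=> hs r0; have [j hj] := shift_approx hs r0.
rewrite hj; split; first exact: ev_meas.
  by rewrite (@ev_subst j%:R X g r (abs_nat_le1 _)); exact: ev_meas.
by rewrite shiftn_prob.
Qed.

Lemma if_dir : stationary abs P X.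
Proof.
move=> s hs B hB.
pose Xs := fun w t => X w (t + s).
pose Ls := [set B : set (K -> K) | [/\ measurable (X @^-1` B),
   measurable (Xs @^-1` B) & P (X @^-1` B) = P (Xs @^-1` B)]].
have GL : Gb `<=` Ls.
  move=> C [->|[g [r [r0 ->]]]].
    by rewrite /Ls /= !preimage_set0; split => //; exact: measurable0.
  exact: stat_ball.
have dL : dynkin Ls.
  split.
  - by rewrite /Ls /= !preimage_setT; split => //; exact: measurableT.
  - move=> C [h1 h2 h3]; rewrite /Ls /= -!preimage_setC.
    split; [exact: measurableC|exact: measurableC|].
    by rewrite !probability_setC // h3.
  - move=> F tF hF; rewrite /Ls /= !preimage_bigcup.
    have tr (f : T -> K -> K) : trivIset setT (fun n => f @^-1` F n).
      move=> i j _ _ [w [h1 h2]]; apply: tF => //; by exists (f w).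
    split.
    + by apply: bigcup_measurable => k _; case: (hF k).
    + by apply: bigcup_measurable => k _; case: (hF k).
    rewrite !measure_bigcup //; first (apply: eq_eseriesr => i _; by case: (hF i)).
    * by move=> i _; case: (hF i).
    * by move=> i _; case: (hF i).
have lL : lambda_system setT Ls by apply/dynkin_lambda_system.
have := lambda_system_subset Gb_setI lL GL.
move=> /(_ (fun _ _ _ _ => I)) sub.
have : <<s Gb >> B.
  apply: (sub_smallest2r (smallest_sigma_algebra _ _) _ hB).
  move=> C [g [r [_ [r0 ->]]]]; right; by exists g, r.
by move=> /sub [].
Qed.

End IfDir.

Lemma coef_bound N (c : nat -> K) r :
  (forall t, abs t <= 1 -> abs (\sum_(k < N) c k * binom t k) < r) ->
  forall k, (k < N)%N -> abs (c k) < r.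
Proof.
elim: N c => [|N IH] c h k //.
case: k => [_|k kN].
  have h01 : abs (0 : K) <= 1 by rewrite abs0 ler01.
  have := h 0 h01.
  rewrite big_ord_recl binom0 mulr1 big1 ?addr0 // => i _.
  by rewrite binom0S mulr0.
apply: (IH (fun j => c j.+1)) => // t ht.
have ht1 : abs (t + 1) <= 1 by apply: absD_le; rewrite ?abs1.
have := absB_lt (h _ ht1) (h _ ht).
rewrite pascal_sum [X in _ - X]big_ord_recr /=.
rewrite (eq_bigr (fun k : 'I_N => c k * binom t k + c k.+1 * binom t k)); last first.
  by move=> i _; rewrite mulrDl.
rewrite big_split /=.
set A := \sum_(i < N) c i * binom t i; set C := \sum_(i < N) c i.+1 * binom t i.
by have -> : A + C + c N * binom t N - (A + c N * binom t N) = C by ring.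
Qed.

Definition Qs N (g : K -> K) r : (nat -> K) -> Prop := fun z =>
  forall t, abs t <= 1 ->
    abs (\sum_(k < N) (a k * z k + a k.+1 * z k.+1) * binom t k - g t) < r.

Lemma ev_shift1' N g r : 0 < r -> (forall n, (N <= n)%N -> abs (a n) < r) ->
  ev (fun w t => X w (t + 1)) g r = [set w | Qs N g r (fun k => Z k w)].
Proof.
move=> r0 hN.
have hN1 : forall n, (N.+1 <= n)%N -> abs (a n) < r by move=> n hn; apply: hN; exact: ltnW.
have key w t : abs t <= 1 -> abs (X w (t + 1) -
     \sum_(k < N) (a k * Z k w + a k.+1 * Z k.+1 w) * binom t k) < r.
  move=> ht; have ht1 : abs (t + 1) <= 1 by apply: absD_le; rewrite ?abs1.
  have E : S N.+1 w (t + 1) = \sum_(k < N) (a k * Z k w + a k.+1 * Z k.+1 w) * binom t k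
                              + a N * Z N w * binom t N.
    by rewrite /S (pascal_sum N (fun k => a k * Z k w)).
  have -> : X w (t + 1) - \sum_(k < N) (a k * Z k w + a k.+1 * Z k.+1 w) * binom t k
     = (X w (t + 1) - S N.+1 w (t + 1)) + a N * Z N w * binom t N by rewrite E; ring.
  apply: absD_lt; first exact: trunc.
  by apply: le_lt_trans (term_le _ _ ht) (hN _ (leqnn N)).
apply/seteqP; split => w /= h t ht.
  by apply/(close_iff _ (key w t ht)); exact: h.
by apply/(close_iff _ (key w t ht)); exact: h.
Qed.

Lemma small_term (k : nat) (x y : K) m r : abs (a k) * rho m <= r -> 0 < r ->
  abs (x - y) < rho m -> abs (a k * x - a k * y) < r.
Proof.
move=> har r0 hxy; rewrite -mulrBr absM.
have [a0|a0] := eqVneq (abs (a k)) 0; first by rewrite a0 mul0r.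
apply: lt_le_trans har; rewrite ltr_pM2l //; by rewrite lt_def a0 abs_ge0.
Qed.

Lemma Qs_inv N g r m : 0 < r ->
  (forall k, (k < N.+1)%N -> abs (a k) * rho m <= r) -> invariant m N (Qs N g r).
Proof.
move=> r0 har z z' hz hq t ht.
have hd : abs (\sum_(k < N) (a k * z k + a k.+1 * z k.+1) * binom t k -
               \sum_(k < N) (a k * z' k + a k.+1 * z' k.+1) * binom t k) < r.
  rewrite -sumrB; apply: abs_sum_lt => // k _.
  rewrite -mulrBl absM; apply: le_lt_trans (ler_piMr (abs_ge0 _) (abs_binom_le1 _ ht)) _.
  have -> : a k * z k + a k.+1 * z k.+1 - (a k * z' k + a k.+1 * z' k.+1)
     = (a k * z k - a k * z' k) + (a k.+1 * z k.+1 - a k.+1 * z' k.+1) by ring.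
  have kN := ltn_ord k.
  apply: absD_lt; apply: small_term => //.
  - by apply: har; exact: ltnW.
  - by apply: hz; exact: ltnW.
  - exact: har.
  - exact: hz.
by apply/(close_iff _ hd); exact: hq.
Qed.

Lemma cont_term (c : K) k e (t u : K) : abs t <= 1 -> abs u <= 1 -> 0 < e ->
  abs (u - t) < e / (abs c + 1) * abs (k`!%:R : K) ->
  abs (c * binom u k - c * binom t k) < e.
Proof.
move=> ht hu e0 h.
have c1 : 0 < abs c + 1 by rewrite ltr_wpDl ?abs_ge0.
have e1 : 0 < e / (abs c + 1) by rewrite divr_gt0.
have hb := binom_cont ht hu e1 h.
rewrite -mulrBr absM.
apply: le_lt_trans (ler_wpM2l (abs_ge0 c) (ltW hb)) _.
rewrite mulrA ltr_pdivrMr // mulrC ltr_pM2l //.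
by rewrite ltrDl ltr01.
Qed.

Lemma onlyif_dir : stationary abs P X -> forall n, abs (a n.+1) <= abs (a n).
Proof.
move=> hst n; rewrite leNgt; apply/negP => hlt.
set A := a n.+1; set r := abs A.
have r0 : 0 < r by apply: le_lt_trans hlt; exact: abs_ge0.
pose g := fun t : K => A * binom t n + A * binom t n.+1.
have gc : continuous_on_Zp abs g.
  move=> t ht e e0.
  have e2 : 0 < e / (r + 1) by rewrite divr_gt0 // ltr_wpDl ?abs_ge0.
  have f1 : 0 < abs (n`!%:R : K) by apply: abs_gt0; exact: fact_neq0.
  have f2 : 0 < abs (n.+1`!%:R : K) by apply: abs_gt0; exact: fact_neq0.
  exists (e / (r + 1) * (abs (n`!%:R : K) * abs (n.+1`!%:R : K))).
    by rewrite mulr_gt0 // mulr_gt0.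
  move=> u hu hut.
  have -> : g u - g t = (A * binom u n - A * binom t n) + (A * binom u n.+1 - A * binom t n.+1).
    by rewrite /g; ring.
  apply: absD_lt; apply: cont_term => //; apply: lt_le_trans hut _;
    rewrite ler_pM2l //.
    by rewrite ler_piMr ?abs_ge0 // abs_nat_le1.
  by rewrite ler_piMl ?abs_ge0 // abs_nat_le1.
have hB : borelC abs (cball g r).
  by apply: sub_sigma_algebra; exists g, r.
have h11 : abs (1 : K) <= 1 by rewrite abs1.
have := hst 1 h11 (cball g r) hB.
move=> hst1; change (P (ev X g r) = P (ev (fun w t => X w (t + 1)) g r)) in hst1.
have [N0 hN0] := ha0 r0.
set N := maxn N0 n.+2.
have hN : forall k, (N <= k)%N -> abs (a k) < r.
  by move=> k hk; apply: hN0; apply: leq_trans hk; exact: leq_maxl.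
have nN : (n.+2 <= N)%N by exact: leq_maxr.
pose gam := fun k : nat => if (k == n) || (k == n.+1) then A else 0.
have g0 k : k != n -> k != n.+1 -> gam k = 0.
  by move=> h1 h2; rewrite /gam (negbTE h1) (negbTE h2).
have gsum t : g t = \sum_(k < N) gam k * binom t k.
  rewrite -(big_mkord xpredT (fun k => gam k * binom t k)).
  rewrite (big_cat_nat (leq0n n.+2) nN) /=.
  rewrite [X in _ = _ + X]big1_seq ?addr0; last first.
    move=> k /andP[_]; rewrite mem_index_iota => /andP[hk _].
    by rewrite g0 ?mul0r //; apply/eqP => e; move: hk; lia.
  rewrite !big_nat_recr //= big1_seq ?add0r; last first.
    move=> k /andP[_]; rewrite mem_index_iota => /andP[_ hk].
    by rewrite g0 ?mul0r //; apply/eqP => e; move: hk; lia.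
  by rewrite /gam eqxx /= eqxx orbT.
have E0 : ev X g r = set0.
  apply/seteqP; split => w // hw.
  have := hw; rewrite (ev_X g r0 hN) /= => hq.
  have hc : forall t, abs t <= 1 ->
      abs (\sum_(k < N) (a k * Z k w - gam k) * binom t k) < r.
    move=> t ht; have := hq t ht; rewrite gsum /Qg -sumrB.
    by under [in X in _ -> X]eq_bigr do rewrite mulrBl.
  have := @coef_bound N (fun k => a k * Z k w - gam k) r hc n (leq_trans (leqnSn n.+1) nN).
  rewrite /gam eqxx /=.
  have hsm : abs (a n * Z n w) < abs (- A).
    rewrite absN absM; apply: le_lt_trans hlt.
    by apply: ler_piMr; [exact: abs_ge0|exact: hZ1].
  by rewrite addrC (abs_dom hsm) absN ltxx.
have [m hm] := choose_m N.+1 r0 (fun k => abs_ge0 (a k)).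
pose c := fun k : nat => if k == n.+1 then (1 : K) else 0.
have hc1 k : abs (c k) <= 1 by rewrite /c; case: ifP => _; rewrite ?abs1 ?abs0 ?ler01.
have sub : box m N c `<=` ev (fun w t => X w (t + 1)) g r.
  move=> w hw; rewrite (ev_shift1' g r0 hN) /= => t ht.
  rewrite gsum -sumrB; apply: abs_sum_lt => // k _.
  rewrite -mulrBl absM; apply: le_lt_trans (ler_piMr (abs_ge0 _) (abs_binom_le1 _ ht)) _.
  have small j : (j <= N)%N -> j != n.+1 -> abs (a j * Z j w) < r.
    move=> jN jn; have := hw j jN; rewrite /ball /= /c (negbTE jn) => h.
    have := small_term (hm j jN) r0 h; by rewrite mulr0 subr0.
  have near : abs (a n.+1 * Z n.+1 w - A) < r.
    have := hw n.+1 (leq_trans (leqnSn _) nN); rewrite /ball /= /c eqxx => h.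
    have hn1 : (n.+1 < N.+1)%N by apply: leq_trans nN _.
    by have := small_term (hm n.+1 hn1) r0 h; rewrite mulr1.
  have kN := ltn_ord k.
  rewrite /gam; case: (eqVneq (k : nat) n) => [ekn|kn] /=.
    rewrite ekn.
    have -> : a n * Z n w + a n.+1 * Z n.+1 w - A = a n * Z n w + (a n.+1 * Z n.+1 w - A) by ring.
    apply: absD_lt => //; apply: small; [by apply: leq_trans nN; apply: ltnW|by rewrite neq_ltn ltnSn].
  case: (eqVneq (k : nat) n.+1) => [ekn1|kn1] /=.
    rewrite ekn1.
    have -> : a n.+1 * Z n.+1 w + a n.+2 * Z n.+2 w - A = (a n.+1 * Z n.+1 w - A) + a n.+2 * Z n.+2 w by ring.
    apply: absD_lt => //; apply: small => //; by rewrite neq_ltn ltnSn orbT.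
  rewrite subr0; apply: absD_lt.
    by apply: small => //; exact: ltnW.
  by apply: small => //; rewrite eqSS.
have mE : measurable (ev (fun w t => X w (t + 1)) g r).
  rewrite (ev_shift1' g r0 hN); apply: (Q_meas (m := m) (L := N)).
  by apply: Qs_inv => // k kN; exact: hm.
have hle : (P (box m N c) <= P (ev (fun w t => X w (t + 1)) g r))%E.
  exact: le_measure (mem_set (box_meas m N c)) (mem_set mE) sub.
move: hle; rewrite -hst1 E0 measure0 box_prob // lee_fin leNgt => /negP; apply.
by apply: exprn_gt0; rewrite invr_gt0 ltr0n expn_gt0 prime_gt0.
Qed.
End Basic.

Unset Implicit Arguments.

Theorem theorem8p2 (p : nat) (R : realType) (K : fieldType) (abs : K -> R)
    (d : measure_display) (T : measurableType d) (P : probability T R)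
    (a : nat -> K) (Z : nat -> T -> K) :
  prime p -> is_Qp p abs ->
  (forall e : R, 0 < e -> exists N, forall n, (N <= n)%N -> abs (a n) < e) ->
  (forall n, measurable_K abs (Z n)) ->
  (forall n, haar_uniform abs P (Z n)) ->
  independent_family abs P Z ->
  (stationary abs P (mahler_series abs a Z) <->
   forall n, abs (a n.+1) <= abs (a n)).
Proof.
move=> hp hQ ha0 hZm hZu hind; split.
  exact: (onlyif_dir hp hQ hZm hZu hind ha0).
move=> hmono; exact: (if_dir hp hQ hZm hZu hind ha0 hmono).
Qed.
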